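(* (i) For a first countable topological space $(X,\tau)$ the following are equivalent: (1) $X$ is Hausdorff; (2) $X$ is a kd-space; (3) $X$ is a kc-space; (4) $X$ is a US-space. (ii) A semi-regular topological space $(X,\tau)$ is a kd-space if and only if it is a kc-space.
   Context: $X$ is a kc-space if every compact subset of $X$ is closed; $X$ is a kd-space if every compact subset of $X$ is $\delta$-closed, where $A$ is $\delta$-closed if every point $x$ such that $A\cap U\ne\emptyset$ for all regular open $U\ni x$ (regular open meaning $U=\mathrm{Int}(\mathrm{Cl}(U))$) belongs to $A$. $X$ is a US-space (unique sequence space) if every convergent sequence has a unique limit. $X$ is semi-regular if the regular open sets form a base for $\tau$. *)

(* Defs.v *)
From mathcomp Require Import all_boot all_order all_algebra.
From mathcomp Require Import all_classical all_reals all_analysis.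
Set Implicit Arguments. Unset Strict Implicit. Unset Printing Implicit Defensive.
Local Open Scope classical_set_scope.

Section Defs.
Variable T : topologicalType.

Definition regular_open (U : set T) : Prop := U = interior (closure U).

Definition delta_closed (A : set T) : Prop :=
  forall x : T, (forall U : set T, regular_open U -> U x -> A `&` U !=set0) -> A x.

Definition kc_space : Prop := forall A : set T, compact A -> closed A.

Definition kd_space : Prop := forall A : set T, compact A -> delta_closed A.

Definition us_space : Prop :=
  forall (u : nat -> T) (x y : T), u @ \oo --> x -> u @ \oo --> y -> x = y.

Definition first_countable : Prop :=
  forall x : T, exists B : set (set T),
    [/\ countable B, (forall b, B b -> nbhs x b) &
        (forall U, nbhs x U -> exists2 b, B b & b `<=` U)].

Definition semi_regular : Prop :=
  forall (U : set T) (x : T), open U -> U x ->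
    exists V : set T, [/\ regular_open V, V x & V `<=` U].
End Defs.

(* Main.v *)
Require Import Defs.
From mathcomp Require Import all_boot all_order all_algebra.
From mathcomp Require Import all_classical all_reals all_analysis.
Set Implicit Arguments. Unset Strict Implicit. Unset Printing Implicit Defensive.
Local Open Scope classical_set_scope.

Section Helpers.
Variable T : topologicalType.

Lemma IntCl_regular (V : set T) : regular_open (interior (closure V)).
Proof.
rewrite /regular_open; apply/seteqP; split.
- move=> z hz.
  have : (interior (closure V))° z by move: (open_interior (closure V)); rewrite openE; apply.
  apply: interiorS; exact: subset_closure.
- apply: interiorS => z hz.
  apply: (closed_closure (A := V)).
  exact: (closureS (@interior_subset T (closure V)) hz).
Qed.

Lemma hausdorff_kd : hausdorff_space T -> kd_space T.
Proof.
move=> hT K cK x hx.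
pose I := [set V : set T | open V /\ V x].
pose F := filter_from I (fun V => K `&` interior (closure V)).
have FF : Filter F.
  apply: filter_from_filter; first by exists setT; split; [exact: openT|].
  move=> V1 V2 [oV1 V1x] [oV2 V2x]; exists (V1 `&` V2).
    by split; [exact: openI|].
  move=> z [Kz Iz]; split; split => //.
    by apply: (interiorS (closureS (@subIsetl _ V1 V2))).
  by apply: (interiorS (closureS (@subIsetr _ V1 V2))).
have PF : ProperFilter F.
  apply: filter_from_proper => // V [oV Vx].
  apply: hx; first exact: IntCl_regular.
  have nV : nbhs x V by apply: open_nbhs_nbhs.
  exact: (filterS (@subset_closure _ V) nV).
have FK : F K by exists setT; [split; [exact: openT|] | apply: subIsetl].
have [k [Kk ck]] := cK F PF FK.
suff -> : x = k by [].
apply: hT => A B nA nB.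
move: nA; rewrite nbhsE => -[A' [oA' A'x] A'A].
move: nB; rewrite nbhsE => -[B' [oB' B'k] B'B].
have FA' : F (K `&` interior (closure A')) by exists A'.
have nB' : nbhs k B' by apply: open_nbhs_nbhs.
have [z [[Kz Iz] B'z]] := ck _ _ FA' nB'.
have clz : closure A' z by apply: interior_subset.
have nzB' : nbhs z B' by apply: open_nbhs_nbhs.
have [w [A'w B'w]] := clz _ nzB'.
by exists w; split; [apply: A'A|apply: B'B].
Qed.

Lemma kd_kc : kd_space T -> kc_space T.
Proof.
move=> h K cK x clx; apply: (h K cK) => U rU Ux.
have oU : open U by rewrite rU; exact: open_interior.
exact: clx U (open_nbhs_nbhs (conj oU Ux)).
Qed.

Lemma seq_set_compact (u : nat -> T) (x : T) (N : nat) :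
  u @ \oo --> x -> compact ([set x] `|` [set u n | n in [set n | (N <= n)%N]]).
Proof.
move=> ux F PF FK.
have [[A [B [FA nB AB0]]]|nex] :=
  pselect (exists A B, [/\ F A, nbhs x B & A `&` B = set0]); last first.
  exists x; split; first by left.
  move=> A B FA nB; apply/set0P/negP => /eqP AB0; apply: nex; by exists A, B.
have [M _ hM] := ux B nB.
pose S := [set u n | n in [set n | (N <= n)%N /\ (n < M)%N]].
have finS : finite_set S.
  apply: (@sub_finite_set _ _ (u @` `I_M)); last by apply: finite_image; exact: finite_II.
  by move=> _ [n [_ nM] <-]; exists n.
have FS : F S.
  apply: filterS (filterI FA FK) => z [Az [zx|[n Nn nz]]].
    exfalso; have : (A `&` B) x by split; [rewrite -zx|exact: (nbhs_singleton nB)].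
    by rewrite AB0.
  rewrite -nz; exists n => //; split => //; rewrite ltnNge; apply/negP => Mn.
  have : (A `&` B) (u n) by split; [rewrite nz|exact: (hM n Mn)].
  by rewrite AB0.
have [z [[n [Nn _] <-] cz]] := finite_compact finS PF FS.
by exists (u n); split => //; right; exists n.
Qed.

Lemma kc_us : kc_space T -> us_space T.
Proof.
move=> kc u x y ux uy.
have key : forall N, y = x \/ exists2 n, (N <= n)%N & u n = y.
  move=> N; have := kc _ (@seq_set_compact u x N ux) y.
  case.
  + move=> B nB; have [M _ hM] := uy B nB.
    exists (u (maxn N M)); split; last by apply: hM; rewrite /= leq_maxr.
    by right; exists (maxn N M) => //; rewrite /= leq_maxl.
  + by left.
  + by move=> [n Nn <-]; right; exists n.
have [//|nyx] := pselect (x = y).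
have h N : exists2 n, (N <= n)%N & u n = y.
  by case: (key N) => // yx; exfalso; apply: nyx.
have : closure [set y] x.
  move=> B nB; have [M _ hM] := ux B nB; have [n Mn <-] := h M.
  by exists (u n); split => //; exact: hM.
by move/(kc _ (@compact_set1 T y)).
Qed.

Lemma fc_seq_base (x : T) : first_countable T ->
  exists e : nat -> set T, (forall n, nbhs x (e n)) /\
    (forall U, nbhs x U -> exists k, e k `<=` U).
Proof.
move=> fc; have [B [cB nB bB]] := fc x.
have [f finj] := countable_injP _ cB.
exists (fun n => if pselect (exists b, B b /\ f b = n) is left h
                 then proj1_sig (cid h) else setT); split.
- move=> n; case: pselect => [h|_]; last exact: filterT.
  by case: cid => b [Bb _] /=; exact: nB.
- move=> U nU; have [b Bb bU] := bB U nU; exists (f b).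
  case: pselect => [h|[]]; last by exists b.
  case: cid => b' [Bb' fb'] /=.
  have -> : b' = b by apply: finj; rewrite ?inE.
  exact: bU.
Qed.

Lemma nbhs_W (x : T) (e : nat -> set T) : (forall n, nbhs x (e n)) ->
  forall n, nbhs x [set z | forall i, (i <= n)%N -> e i z].
Proof.
move=> ne; elim => [|n IH].
  by apply: filterS (ne 0%N) => z ez i; rewrite leqn0 => /eqP ->.
apply: filterS (filterI IH (ne n.+1)) => z [Wz ez] i.
by rewrite leq_eqVlt => /orP[/eqP->//|]; rewrite ltnS; exact: Wz.
Qed.

Lemma us_hausdorff : first_countable T -> us_space T -> hausdorff_space T.
Proof.
move=> fc us x y cxy.
have [ex [nex bex]] := fc_seq_base x fc.
have [ey [ney bey]] := fc_seq_base y fc.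
have nWx := nbhs_W nex; have nWy := nbhs_W ney.
pose u n := proj1_sig (cid (cxy _ _ (nWx n) (nWy n))).
have hu n : (forall i, (i <= n)%N -> ex i (u n)) /\ (forall i, (i <= n)%N -> ey i (u n)).
  by rewrite /u; case: cid => z [] /=.
apply: (us u).
- move=> U nU; have [k ekU] := bex U nU.
  apply: filterS (nbhs_infty_ge k) => n kn; apply: ekU; exact: (hu n).1.
- move=> U nU; have [k ekU] := bey U nU.
  apply: filterS (nbhs_infty_ge k) => n kn; apply: ekU; exact: (hu n).2.
Qed.

Lemma kc_kd_sr : semi_regular T -> kc_space T -> kd_space T.
Proof.
move=> sr kc K cK x hx.
have [//|nKx] := pselect (K x).
have oC : open (~` K) by apply: closed_openC; exact: kc.
have [V [rV Vx VK]] := sr _ x oC nKx.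
have [z [Kz Vz]] := hx V rV Vx.
by have := VK z Vz.
Qed.

End Helpers.

Theorem mainTheorem4 :
  (forall T : topologicalType, first_countable T ->
     [/\ hausdorff_space T <-> kd_space T,
         kd_space T <-> kc_space T &
         kc_space T <-> us_space T]) /\
  (forall T : topologicalType, semi_regular T ->
     (kd_space T <-> kc_space T)).
Proof.
split.
- move=> T fc.
  have h1 := @hausdorff_kd T; have h2 := @kd_kc T; have h3 := @kc_us T.
  have h4 := us_hausdorff fc.
  split; split; tauto.
- move=> T sr; split; [exact: kd_kc | exact: kc_kd_sr].
Qed.
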